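(* Let $N$ be an odd positive integer and let $|\psi\rangle$ be any pure state of $N$ qubits, with density matrix $\rho=|\psi\rangle\langle\psi|$. Then its length of correlations satisfies $$\mathcal{C}(\psi)=\sum_{j_1,\dots,j_N=1}^{3} T_{j_1\dots j_N}^2\;\le\; 2^{N-1}.$$
   Context: Let $\sigma_0=\mathbb{I}$ and let $\sigma_1,\sigma_2,\sigma_3$ be the Pauli matrices. Any $N$-qubit density matrix can be written as $\rho=2^{-N}\sum_{\mu_1,\dots,\mu_N=0}^{3}T_{\mu_1\dots\mu_N}\,\sigma_{\mu_1}\otimes\dots\otimes\sigma_{\mu_N}$ with real coefficients $T_{\mu_1\dots\mu_N}=\mathrm{Tr}(\rho\,\sigma_{\mu_1}\otimes\dots\otimes\sigma_{\mu_N})$. The length of correlations of $\rho$ is $\mathcal{C}(\rho)=\sum_{j_1,\dots,j_N=1}^{3}T_{j_1\dots j_N}^2$ (all indices ranging over $1,2,3$ only, i.e. only full $N$-partite correlations). *)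

(* Defs.v *)
From HB Require Import structures.
From mathcomp Require Import all_boot all_order all_algebra.
Unset Printing Implicit Defensive.
Import Order.TTheory GRing.Theory Num.Theory.
Local Open Scope ring_scope.

(* Complex scalars: any numeric closed field C (e.g. complex numbers over a
   real closed field / realType).  *)

(* Pauli matrices sigma_0 = I, sigma_1 = X, sigma_2 = Y, sigma_3 = Z,
   as 2x2 matrices with rows/columns indexed by 'I_2 (basis |0>, |1>). *)
Definition pauli (C : numClosedFieldType) (mu : 'I_4) : 'M[C]_2 :=
  \matrix_(a < 2, b < 2)
    match val mu with
    | 0%N => if a == b then 1 else 0
    | 1%N => if a != b then 1 else 0
    | 2%N => if a == b then 0 else if val a == 0%N then - 'i else 'i
    | _   => if a == b then (if val a == 0%N then 1 else -1) else 0
    end.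

(* Computational basis of N qubits: bit strings x : 'I_N -> 'I_2.
   A state vector psi assigns an amplitude to each basis string. *)
Notation basis N := {ffun 'I_N -> 'I_2}.

(* Entry (x,y) of sigma_{mu_1} (x) ... (x) sigma_{mu_N} (Kronecker product). *)
Definition pauli_string (C : numClosedFieldType) (N : nat)
  (mu : {ffun 'I_N -> 'I_4}) (x y : basis N) : C :=
  \prod_(k < N) pauli C (mu k) (x k) (y k).

Definition rho_of {C : numClosedFieldType} {N : nat} (psi : basis N -> C)
  (x y : basis N) : C := psi x * (psi y)^*.

(* T_mu = Tr(rho sigma_{mu_1} (x) ... (x) sigma_{mu_N}). *)
Definition corr_T {C : numClosedFieldType} {N : nat} (psi : basis N -> C)
  (mu : {ffun 'I_N -> 'I_4}) : C :=
  \sum_(x : basis N) \sum_(y : basis N) rho_of psi x y * pauli_string C N mu y x.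

Definition length_corr {C : numClosedFieldType} {N : nat} (psi : basis N -> C) : C :=
  \sum_(mu : {ffun 'I_N -> 'I_4} | [forall k, mu k != ord0]) corr_T psi mu ^+ 2.

Definition normalized {C : numClosedFieldType} {N : nat} (psi : basis N -> C) : Prop :=
  \sum_(x : basis N) `|psi x| ^+ 2 = 1.

(* Main.v *)
Require Import Defs.
From HB Require Import structures.
From mathcomp Require Import all_boot all_order all_algebra.
From mathcomp Require Import ring.
Import Order.TTheory GRing.Theory Num.Theory.
Local Open Scope ring_scope.

Section S.
Variable C : numClosedFieldType.

Lemma pauli_herm (m : 'I_4) (a b : 'I_2) : (pauli C m a b)^* = pauli C m b a.
Proof.
rewrite !mxE.
case: m => [[|[|[|[|m]]]] Hm] //=;
case: a => [[|[|a]] Ha] //=; case: b => [[|[|b]] Hb] //=;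
rewrite ?conjC1 ?conjC0 ?rmorphN /= ?conjC1 ?conjCi ?opprK //.
Qed.

Definition eps (a c : 'I_2) : C := if a == c then 0 else if val a == 0%N then 1 else -1.

Lemma pauli_compl (a b c d : 'I_2) :
  \sum_(m < 4) pauli C m a b * pauli C m c d = 2 * (a == d)%:R * (b == c)%:R.
Proof.
rewrite !big_ord_recl big_ord0 !mxE /=.
case: a => [[|[|a]] Ha] //=; case: b => [[|[|b]] Hb] //=;
case: c => [[|[|c]] Hc] //=; case: d => [[|[|d]] Hd] //=;
rewrite /bump /=; rewrite ?mulrNN ?mulNr ?mulrN -?expr2 ?sqrCi; ring.
Qed.

Definition wt (m : 'I_4) : C := if m == ord0 then 1 else -1.

Lemma pauli_sing (a b c d : 'I_2) :
  \sum_(m < 4) wt m * (pauli C m a b * pauli C m c d) = 2 * eps a c * eps b d.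
Proof.
rewrite /wt /eps !big_ord_recl big_ord0 !mxE /=.
case: a => [[|[|a]] Ha] //=; case: b => [[|[|b]] Hb] //=;
case: c => [[|[|c]] Hc] //=; case: d => [[|[|d]] Hd] //=;
rewrite /bump /=; rewrite ?mulrNN ?mulNr ?mulrN -?expr2 ?sqrCi; ring.
Qed.

Lemma eps_anti (a c : 'I_2) : eps c a = - eps a c.
Proof.
rewrite /eps; case: a => [[|[|a]] Ha] //=; case: c => [[|[|c]] Hc] //=;
by rewrite ?oppr0 ?opprK.
Qed.

Variable N : nat.
Variable psi : {ffun 'I_N -> 'I_2} -> C.

Definition cc (x y x' y' : basis N) := psi x * (psi y)^* * (psi x' * (psi y')^*).

Lemma T2 mu : corr_T psi mu ^+ 2 = \sum_x \sum_y \sum_x' \sum_y' cc x y x' y' *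
   \prod_(k < N) (pauli C (mu k) (y k) (x k) * pauli C (mu k) (y' k) (x' k)).
Proof.
rewrite expr2 /corr_T big_distrl; apply eq_bigr=> x _; rewrite big_distrl;
apply eq_bigr => y _; rewrite big_distrr; apply eq_bigr=> x' _; rewrite big_distrr;
apply eq_bigr => y' _ /=; rewrite /rho_of /pauli_string /cc big_split /=; ring.
Qed.

Lemma wsum (f : 'I_4 -> C) :
  \sum_(mu : {ffun 'I_N -> 'I_4}) (\prod_(k < N) f (mu k)) * corr_T psi mu ^+ 2 =
  \sum_x \sum_y \sum_x' \sum_y' cc x y x' y' *
    \prod_(k < N) \sum_(m < 4) f m * (pauli C m (y k) (x k) * pauli C m (y' k) (x' k)).
Proof.
transitivity (\sum_(mu : {ffun 'I_N -> 'I_4}) \sum_x \sum_y \sum_x' \sum_y' cc x y x' y' *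
   \prod_(k < N) (f (mu k) * (pauli C (mu k) (y k) (x k) * pauli C (mu k) (y' k) (x' k)))).
  apply eq_bigr => mu _; rewrite T2 big_distrr; apply eq_bigr => x _;
  rewrite big_distrr; apply eq_bigr => y _; rewrite big_distrr; apply eq_bigr => x' _;
  rewrite big_distrr; apply eq_bigr => y' _ /=; rewrite [in RHS]big_split /=; ring.
rewrite exchange_big; apply eq_bigr => x _; rewrite exchange_big; apply eq_bigr => y _.
rewrite exchange_big; apply eq_bigr => x' _; rewrite exchange_big; apply eq_bigr => y' _.
by rewrite -big_distrr bigA_distr_bigA.
Qed.

Lemma prod_eq (u v : basis N) : \prod_(k < N) ((u k == v k)%:R : C) = (u == v)%:R.
Proof.
case: (eqVneq u v) => [->|Huv]; first by rewrite big1 // => k _; rewrite eqxx.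
have [k Hk] : exists k, u k != v k.
  apply/existsP; apply: contraR Huv; rewrite negb_exists => /forallP H.
  by apply/eqP/ffunP => k; apply/eqP; have := H k; rewrite negbK.
by rewrite (bigD1 k) //= (negbTE Hk) mul0r.
Qed.

Lemma sum_delta (F : basis N -> C) a : \sum_x F x * (a == x)%:R = F a.
Proof.
rewrite (bigD1 a) //= eqxx mulr1 big1 ?addr0 // => x Hx.
by rewrite eq_sym (negbTE Hx) mulr0.
Qed.

Lemma sumA : \sum_(mu : {ffun 'I_N -> 'I_4}) corr_T psi mu ^+ 2 =
  2 ^+ N * (\sum_x psi x * (psi x)^*) ^+ 2.
Proof.
transitivity (\sum_(mu : {ffun 'I_N -> 'I_4})
   (\prod_(k < N) (fun _ : 'I_4 => (1:C)) (mu k)) * corr_T psi mu ^+ 2).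
  by apply eq_bigr => mu _; rewrite big1 ?mul1r.
rewrite (wsum (fun _ => 1)).
transitivity (\sum_x \sum_y \sum_x' \sum_y' cc x y x' y' *
     (2 ^+ N * (y == x')%:R * (x == y')%:R)).
  apply eq_bigr => x _; apply eq_bigr => y _; apply eq_bigr => x' _;
  apply eq_bigr => y' _; congr (_ * _).
  rewrite (eq_bigr (fun k => 2 * ((y k == x' k)%:R : C) * (x k == y' k)%:R)); last first.
    by move=> k _; rewrite -pauli_compl; apply eq_bigr => m _; rewrite mul1r.
  by rewrite !big_split /= prodr_const card_ord !prod_eq.
transitivity (\sum_x \sum_y 2 ^+ N * ((psi x * (psi x)^*) * (psi y * (psi y)^*))).
  apply eq_bigr => x _; apply eq_bigr => y _.
  rewrite (eq_bigr (fun x' => (cc x y x' x * (2 ^+ N * (y == x')%:R)))); last first.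
    move=> x' _; rewrite (eq_bigr (fun y' => (cc x y x' y' * (2 ^+ N * (y == x')%:R)) * (x == y')%:R)).
      by rewrite sum_delta.
    by move=> y' _; rewrite !mulrA.
  rewrite (eq_bigr (fun x' => (cc x y x' x * 2 ^+ N) * (y == x')%:R)).
    by rewrite sum_delta /cc; ring.
  by move=> x' _; rewrite !mulrA.
rewrite expr2 big_distrl /= big_distrr /=; apply eq_bigr => x _.
rewrite big_distrr big_distrr /=; apply eq_bigr => y _; ring.
Qed.

Definition EE (u v : basis N) := \prod_(k < N) eps (u k) (v k).

Lemma sumB : odd N ->
  \sum_(mu : {ffun 'I_N -> 'I_4}) (\prod_(k < N) wt (mu k)) * corr_T psi mu ^+ 2 = 0.
Proof.
move=> oN.
have HE u v : EE v u = - EE u v.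
  rewrite /EE (eq_bigr (fun k => - eps (u k) (v k))); last by move=> k _; rewrite eps_anti.
  by rewrite prodrN card_ord -signr_odd oN expr1 mulN1r.
have HQ : \sum_x \sum_x' psi x * psi x' * EE x x' = 0.
  set Q := (X in X = 0).
  have : Q = - Q.
    rewrite {1}/Q exchange_big /Q -sumrN; apply eq_bigr => a _; rewrite -sumrN.
    by apply eq_bigr => b _; rewrite HE; ring.
  move/eqP; rewrite -subr_eq0 opprK -mulr2n mulrn_eq0 /=; exact/eqP.
rewrite wsum.
transitivity (\sum_x \sum_y \sum_x' \sum_y' cc x y x' y' *
     (2 ^+ N * EE y y' * EE x x')).
  apply eq_bigr => x _; apply eq_bigr => y _; apply eq_bigr => x' _;
  apply eq_bigr => y' _; congr (_ * _).
  rewrite (eq_bigr (fun k => 2 * eps (y k) (y' k) * eps (x k) (x' k))); last first.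
    by move=> k _; rewrite -pauli_sing.
  by rewrite !big_split /= prodr_const card_ord.
transitivity (\sum_x \sum_x' (psi x * psi x' * EE x x') *
   (2 ^+ N * \sum_y \sum_y' (psi y)^* * (psi y')^* * EE y y')).
  apply eq_bigr => x _; rewrite exchange_big; apply eq_bigr => x' _.
  rewrite !big_distrr; apply eq_bigr => y _; rewrite big_distrr big_distrr.
  by apply eq_bigr => y' _ /=; rewrite /cc; ring.
under eq_bigr do rewrite -big_distrl.
by rewrite -big_distrl /= HQ mul0r.
Qed.

Lemma T_real mu : (corr_T psi mu)^* = corr_T psi mu.
Proof.
rewrite /corr_T rmorph_sum exchange_big; apply eq_bigr => y _.
rewrite rmorph_sum; apply eq_bigr => x _.
rewrite /rho_of /pauli_string !rmorphM /= conjCK rmorph_prod.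
rewrite (eq_bigr (fun i => pauli C (mu i) (y i) (x i))); last by move=> i _; exact: pauli_herm.
ring.
Qed.

End S.

Theorem theorem3 (C : numClosedFieldType) (N : nat) (psi : {ffun 'I_N -> 'I_2} -> C) :
  odd N -> normalized psi -> length_corr psi <= (2 ^ N.-1)%:R.
Proof.
move=> oN Hn.
have H1 : \sum_x psi x * (psi x)^* = 1.
  by rewrite -Hn; apply eq_bigr => x _; rewrite normCK.
have HA := sumA C N psi; rewrite H1 expr1n mulr1 in HA.
have HB := sumB C N psi oN.
set s := fun mu : {ffun 'I_N -> 'I_4} => \prod_(k < N) wt C (mu k).
have Tge0 mu : 0 <= corr_T psi mu ^+ 2.
  by rewrite expr2 -{2}(T_real C N psi mu) -normCK exprn_ge0.
have s_pm mu : s mu = 1 \/ s mu = -1.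
  rewrite /s; apply: (big_ind (fun x : C => x = 1 \/ x = -1)); first by left.
    by move=> a b [->|->] [->|->]; rewrite ?mulr1 ?mulrN1 ?opprK; auto.
  by move=> k _; rewrite /wt; case: ifP; auto.
have Fge0 mu : 0 <= (1 - s mu) * corr_T psi mu ^+ 2.
  apply: mulr_ge0 => //; case: (s_pm mu) => ->; rewrite ?subrr // opprK.
  exact: addr_ge0 ler01 ler01.
have H2 : 2 * length_corr psi = \sum_(mu : {ffun 'I_N -> 'I_4} | [forall k, mu k != ord0])
    (1 - s mu) * corr_T psi mu ^+ 2.
  rewrite /length_corr big_distrr; apply eq_bigr => mu /forallP Hmu.
  congr (_ * _); rewrite /s (eq_bigr (fun _ => -1)); last first.
    by move=> k _; rewrite /wt (negbTE (Hmu k)).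
  by rewrite prodr_const card_ord -signr_odd oN expr1 opprK.
have H3 : 2 * length_corr psi <= 2 ^+ N.
  have Hsum : \sum_mu (1 - s mu) * corr_T psi mu ^+ 2 = 2 ^+ N.
    have -> : \sum_mu (1 - s mu) * corr_T psi mu ^+ 2 =
      \sum_mu corr_T psi mu ^+ 2 - \sum_mu s mu * corr_T psi mu ^+ 2.
      by rewrite -sumrB; apply eq_bigr => mu _; rewrite mulrBl mul1r.
    by rewrite HA HB subr0.
  rewrite H2 -Hsum.
  rewrite [X in _ <= X](bigID (fun mu : {ffun 'I_N -> 'I_4} => [forall k, mu k != ord0])) /=.
  by rewrite lerDl sumr_ge0.
have NS : N = N.-1.+1 by rewrite prednK // lt0n; apply: contraTneq oN => ->.
rewrite natrX; move: H3; rewrite {2}NS exprS.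
by rewrite ler_pM2l // ltr0n.
Qed.
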